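(* Let $T$ be an MFQST with explicit bound $k$ on $n$ sources $z_1,\dots,z_n$ and sink $z_{BS}$. Then $$L(T)\ge\frac{1}{n+k+1}\sum_{i=1}^n|z_iz_{BS}|^2.$$
   Context: Let $Z=\{z_1,\dots,z_n\}\subset\mathbb{R}^2$ ($n\ge 1$) be a set of sources and $z_{BS}\in\mathbb{R}^2\setminus Z$ a sink; each source has supply $1$. A flow-dependent quadratic Steiner tree (FQST) consists of a finite set $S\subset\mathbb{R}^2$ of Steiner points and a tree $T$ with vertex set $Z\cup S\cup\{z_{BS}\}$ whose edges are directed towards $z_{BS}$. Every node other than the sink has exactly one out-edge, and the sink has none. Each edge $e$ carries a positive flow $f(e)$ such that: - at each source, the flow on its out-edge minus the total flow on its in-edges equals $1$; - at each Steiner point, the out-flow equals the total in-flow; - the sink receives total flow $n$. The cost is $L(T)=\sum_{e\in E(T)} f(e)|e|^2$. An MFQST with explicit bound $k$ minimises $L$ among all FQSTs with $|S|\le k$. *)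

(* Defs.v *)
From Stdlib Require Import Reals Lra List.
Import ListNotations.
Open Scope R_scope.

Definition point := (R * R)%type.
Definition dist2 (p q : point) : R := (fst p - fst q) ^ 2 + (snd p - snd q) ^ 2.

Definition sumR (l : list R) : R := fold_right Rplus 0 l.

Inductive vtx : Type := Src (i : nat) | Stn (j : nat) | Sink.

Definition vtx_eq_dec (u v : vtx) : {u = v} + {u <> v}.
Proof. decide equality; apply PeanoNat.Nat.eq_dec. Defined.

(* An FQST candidate: number of Steiner points, their positions,
   the out-neighbour (parent) map and the flow on each out-edge
   (flow v = flow on the out-edge of v; meaningless for the sink). *)
Record FQST := mkFQST {
  nst  : nat;
  spos : nat -> point;
  par  : vtx -> vtx;
  flow : vtx -> R
}.

Definition nonsink (n : nat) (T : FQST) : list vtx :=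
  map Src (seq 0 n) ++ map Stn (seq 0 (nst T)).

Definition is_vertex (n : nat) (T : FQST) (v : vtx) : Prop :=
  In v (nonsink n T) \/ v = Sink.

Definition pos (z : nat -> point) (zBS : point) (T : FQST) (v : vtx) : point :=
  match v with
  | Src i => z i
  | Stn j => spos T j
  | Sink => zBS
  end.

Definition inflow (n : nat) (T : FQST) (v : vtx) : R :=
  sumR (map (fun u => if vtx_eq_dec (par T u) v then flow T u else 0) (nonsink n T)).

(* The positions of all vertices are pairwise distinct, i.e. S is a set of
   points disjoint from Z and from z_BS (vertex set Z ∪ S ∪ {z_BS}). *)
Definition distinct_positions (n : nat) (z : nat -> point) (zBS : point) (T : FQST) : Prop :=
  forall u v, is_vertex n T u -> is_vertex n T v ->
    pos z zBS T u = pos z zBS T v -> u = v.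

Definition is_FQST (n : nat) (z : nat -> point) (zBS : point) (T : FQST) : Prop :=
  distinct_positions n z zBS T /\
  (forall v, In v (nonsink n T) -> is_vertex n T (par T v) /\ par T v <> v) /\
  (* the sink has no out-edge; the graph is a tree directed towards the sink:
     following out-edges from any vertex reaches the sink *)
  par T Sink = Sink /\
  (forall v, In v (nonsink n T) -> exists N, Nat.iter N (par T) v = Sink) /\
  (forall v, In v (nonsink n T) -> 0 < flow T v) /\
  (forall i, (i < n)%nat -> flow T (Src i) - inflow n T (Src i) = 1) /\
  (forall j, (j < nst T)%nat -> flow T (Stn j) = inflow n T (Stn j)) /\
  inflow n T Sink = INR n.

Definition cost (n : nat) (z : nat -> point) (zBS : point) (T : FQST) : R :=
  sumR (map (fun v => flow T v * dist2 (pos z zBS T v) (pos z zBS T (par T v)))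
            (nonsink n T)).

Definition is_MFQST (n k : nat) (z : nat -> point) (zBS : point) (T : FQST) : Prop :=
  is_FQST n z zBS T /\ (nst T <= k)%nat /\
  forall T', is_FQST n z zBS T' -> (nst T' <= k)%nat ->
    cost n z zBS T <= cost n z zBS T'.

(* Main.v *)
Require Import Defs.
From Stdlib Require Import Reals List.
From Stdlib Require Import Lra Lia Psatz Arith Classical ClassicalEpsilon.
Import ListNotations.
Open Scope R_scope.

Lemma sumR_app l1 l2 : sumR (l1 ++ l2) = sumR l1 + sumR l2.
Proof. induction l1; simpl; [lra|rewrite IHl1; lra]. Qed.

Lemma sumR_le {A} (f g : A -> R) l :
  (forall x, In x l -> f x <= g x) -> sumR (map f l) <= sumR (map g l).
Proof.
  induction l; simpl; intros H; [lra|].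
  assert (f a <= g a) by auto. assert (sumR (map f l) <= sumR (map g l)) by auto. lra.
Qed.

Lemma sumR_ext {A} (f g : A -> R) l :
  (forall x, In x l -> f x = g x) -> sumR (map f l) = sumR (map g l).
Proof.
  induction l; simpl; intros H; [lra|].
  rewrite H by auto; rewrite IHl by auto; lra.
Qed.

Lemma sumR_plus {A} (f g : A -> R) l :
  sumR (map (fun x => f x + g x) l) = sumR (map f l) + sumR (map g l).
Proof. induction l; simpl; [lra|rewrite IHl; lra]. Qed.

Lemma sumR_minus {A} (f g : A -> R) l :
  sumR (map (fun x => f x - g x) l) = sumR (map f l) - sumR (map g l).
Proof. induction l; simpl; [lra|rewrite IHl; lra]. Qed.

Lemma sumR_scal {A} c (f : A -> R) l :
  sumR (map (fun x => c * f x) l) = c * sumR (map f l).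
Proof. induction l; simpl; [lra|rewrite IHl; lra]. Qed.

Lemma sumR_swap {A B} (F : A -> B -> R) l1 l2 :
  sumR (map (fun x => sumR (map (fun y => F x y) l2)) l1) =
  sumR (map (fun y => sumR (map (fun x => F x y) l1)) l2).
Proof.
  induction l1; simpl.
  - induction l2; simpl; [lra|rewrite <- IHl2; lra].
  - rewrite IHl1. rewrite <- sumR_plus. reflexivity.
Qed.

Lemma sumR_ind (x : vtx) (c : vtx -> R) L :
  NoDup L ->
  sumR (map (fun w => if vtx_eq_dec x w then c w else 0) L) =
  if in_dec vtx_eq_dec x L then c x else 0.
Proof.
  induction L as [|a L IH]; intros ND; [reflexivity|]. cbn [map sumR fold_right].
  change (fold_right Rplus 0 (map (fun w => if vtx_eq_dec x w then c w else 0) L)) with (sumR (map (fun w => if vtx_eq_dec x w then c w else 0) L)).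
  inversion ND; subst. rewrite IH by auto.
  destruct (in_dec vtx_eq_dec x (a :: L)) as [i|ni];
  destruct (vtx_eq_dec x a) as [e|ne];
  destruct (in_dec vtx_eq_dec x L) as [i2|ni2]; subst; try lra; simpl in *; try tauto.
  destruct i; subst; tauto.
Qed.

Lemma nodup_nonsink n T : NoDup (nonsink n T).
Proof.
  unfold nonsink. apply NoDup_app.
  - apply NoDup_map_NoDup_ForallPairs; [intros x y _ _ H; congruence|apply seq_NoDup].
  - apply NoDup_map_NoDup_ForallPairs; [intros x y _ _ H; congruence|apply seq_NoDup].
  - intros x H1 H2. apply in_map_iff in H1, H2. destruct H1 as [? [<- _]].
    destruct H2 as [? [? _]]. discriminate.
Qed.

Lemma iter_S_r {A} (f : A -> A) m x : Nat.iter (S m) f x = Nat.iter m f (f x).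
Proof.
  replace (S m) with (m + 1)%nat by lia. rewrite Nat.iter_add. reflexivity.
Qed.

Definition Pmin (p : vtx -> vtx) (v : vtx) (N : nat) : Prop :=
  Nat.iter N p v = Sink /\ forall M, Nat.iter M p v = Sink -> (N <= M)%nat.

Definition depth (p : vtx -> vtx) (v : vtx) : nat := epsilon (inhabits 0%nat) (Pmin p v).

Lemma min_exists p v : (exists N, Nat.iter N p v = Sink) -> exists N, Pmin p v N.
Proof.
  intros [N HN]. revert HN. induction N as [N IH] using lt_wf_ind. intros HN.
  destruct (classic (exists M, (M < N)%nat /\ Nat.iter M p v = Sink)) as [[M [HM1 HM2]]|Hn].
  - exact (IH M HM1 HM2).
  - exists N. split; auto. intros M HM. destruct (Nat.le_gt_cases N M); auto.
    exfalso; apply Hn; eauto.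
Qed.

Lemma depth_spec p v : (exists N, Nat.iter N p v = Sink) -> Pmin p v (depth p v).
Proof. intros H. unfold depth. apply epsilon_spec. apply min_exists; auto. Qed.

Section Main.
Variables (n : nat) (z : nat -> point) (zBS : point) (T : FQST).
Hypothesis hF : is_FQST n z zBS T.

Lemma vertex_iter v j : is_vertex n T v -> is_vertex n T (Nat.iter j (par T) v).
Proof.
  destruct hF as (_ & Hp & Hs & _).
  intros Hv; induction j; simpl; auto.
  destruct IHj as [H|H]; [apply Hp; auto|rewrite H, Hs; right; auto].
Qed.

Lemma nonsink_ne v : In v (nonsink n T) -> v <> Sink.
Proof.
  unfold nonsink; intros H ->. apply in_app_or in H; destruct H as [H|H];
  apply in_map_iff in H; destruct H as [? [? _]]; discriminate.
Qed.

Lemma depth_ns v : In v (nonsink n T) -> Pmin (par T) v (depth (par T) v).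
Proof.
  destruct hF as (_ & _ & _ & Hr & _). intros H. apply depth_spec; auto.
Qed.

Lemma depth_pos v : In v (nonsink n T) -> (1 <= depth (par T) v)%nat.
Proof.
  intros H. destruct (depth_ns v H) as [H1 _].
  destruct (depth (par T) v); [simpl in H1; exfalso; exact (nonsink_ne v H H1)|lia].
Qed.

Lemma depth_par v : In v (nonsink n T) -> par T v <> Sink ->
  (1 <= depth (par T) (par T v))%nat /\
  (depth (par T) (par T v) + 1 <= depth (par T) v)%nat.
Proof.
  intros H Hp. pose proof (depth_pos v H) as Hd. destruct (depth_ns v H) as [H1 _].
  destruct (depth (par T) v) as [|m] eqn:E; [lia|].
  rewrite iter_S_r in H1.
  assert (Pmin (par T) (par T v) (depth (par T) (par T v))) as [Q1 Q2]
    by (apply depth_spec; eauto).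
  pose proof (Q2 m H1).
  destruct (depth (par T) (par T v)); [simpl in Q1; tauto|lia].
Qed.

Lemma depth_bound v : In v (nonsink n T) -> (depth (par T) v <= n + nst T)%nat.
Proof.
  intros H. destruct (depth_ns v H) as [H1 H2].
  set (h := depth (par T) v) in *.
  assert (ND : NoDup (map (fun j => Nat.iter j (par T) v) (seq 0 h))).
  { apply NoDup_map_NoDup_ForallPairs; [|apply seq_NoDup].
    assert (forall a b, (a < b < h)%nat -> Nat.iter a (par T) v <> Nat.iter b (par T) v).
    { intros a b Hab E.
      assert (Nat.iter (h - b + a) (par T) v = Sink).
      { rewrite Nat.iter_add, E, <- Nat.iter_add. replace (h - b + b)%nat with h by lia. auto. }
      specialize (H2 _ H0). lia. }
    intros a b Ha Hb E. apply in_seq in Ha, Hb.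
    destruct (Nat.lt_total a b) as [|[|]]; auto.
    - exfalso; apply (H0 a b); [lia|auto].
    - exfalso; apply (H0 b a); [lia|auto]. }
  assert (incl (map (fun j => Nat.iter j (par T) v) (seq 0 h)) (nonsink n T)).
  { intros x Hx. apply in_map_iff in Hx. destruct Hx as [j [<- Hj]]. apply in_seq in Hj.
    destruct (vertex_iter v j) as [Q|Q]; [left; auto|auto|].
    specialize (H2 _ Q). lia. }
  pose proof (NoDup_incl_length ND H0).
  rewrite length_map, length_seq in H3. unfold nonsink in H3.
  rewrite length_app, !length_map, !length_seq in H3. exact H3.
Qed.

End Main.

Lemma ineq1 a b h : 0 < h -> a ^ 2 / (h + 1) <= (a - b) ^ 2 + b ^ 2 / h.
Proof.
  intros Hh.
  assert (E : (a - b) ^ 2 + b ^ 2 / h - a ^ 2 / (h + 1) = (h * a - (h + 1) * b) ^ 2 / (h * (h + 1)))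
    by (field; lra).
  assert (0 <= (h * a - (h + 1) * b) ^ 2 / (h * (h + 1))).
  { unfold Rdiv. apply Rmult_le_pos; [apply pow2_ge_0|]. left; apply Rinv_0_lt_compat; nra. }
  lra.
Qed.

Lemma ineq2 a1 a2 b1 b2 hv hp : 0 < hp -> hp + 1 <= hv ->
  (a1 ^ 2 + a2 ^ 2) / hv <= ((a1 - b1) ^ 2 + (a2 - b2) ^ 2) + (b1 ^ 2 + b2 ^ 2) / hp.
Proof.
  intros H1 H2.
  assert ((a1 ^ 2 + a2 ^ 2) / hv <= (a1 ^ 2 + a2 ^ 2) / (hp + 1)).
  { unfold Rdiv. apply Rmult_le_compat_l; [nra|]. apply Rinv_le_contravar; lra. }
  pose proof (ineq1 a1 b1 hp H1). pose proof (ineq1 a2 b2 hp H1).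
  unfold Rdiv in *. lra.
Qed.

Theorem mainTheorem15 (n k : nat) (z : nat -> point) (zBS : point)
  (hn : (1 <= n)%nat)
  (hz : forall i j, (i < n)%nat -> (j < n)%nat -> z i = z j -> i = j)
  (hBS : forall i, (i < n)%nat -> z i <> zBS)
  (T : FQST) (hT : is_MFQST n k z zBS T) :
  cost n z zBS T >=
    / INR (n + k + 1) * sumR (map (fun i => dist2 (z i) zBS) (seq 0 n)).
Proof.
  destruct hT as [hF [hk _]].
  pose proof hF as (_ & Hp & Hs & Hr & Hpos & Hsrc & Hstn & _).
  set (x := Defs.pos z zBS T).
  set (phi := fun v => dist2 (x v) zBS / INR (depth (par T) v)).
  assert (phiS : phi Sink = 0).
  { unfold phi, x, dist2; simpl. unfold Rdiv. replace ((fst zBS - fst zBS) ^ 2 + (snd zBS - snd zBS) ^ 2) with 0 by ring. ring. }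
  set (NS := nonsink n T).
  assert (S1 : sumR (map (fun v => flow T v * (phi v - phi (par T v))) NS) <= cost n z zBS T).
  { unfold cost. apply sumR_le. intros v Hv. apply Rmult_le_compat_l; [left; auto|].
    fold x. destruct (vtx_eq_dec (par T v) Sink) as [E|E].
    - rewrite E, phiS. unfold phi. simpl (x Sink).
      pose proof (depth_pos n z zBS T hF v Hv) as Hd. apply le_INR in Hd. simpl in Hd.
      assert (0 <= dist2 (x v) zBS) by (unfold dist2; pose proof (pow2_ge_0 (fst (x v) - fst zBS)); pose proof (pow2_ge_0 (snd (x v) - snd zBS)); lra).
      assert (dist2 (x v) zBS / INR (depth (par T) v) <= dist2 (x v) zBS).
      { unfold Rdiv. rewrite <- (Rmult_1_r (dist2 (x v) zBS)) at 2.
        apply Rmult_le_compat_l; auto. rewrite <- Rinv_1. apply Rinv_le_contravar; lra. }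
      lra.
    - destruct (depth_par n z zBS T hF v Hv E) as [D1 D2].
      apply le_INR in D1, D2. rewrite plus_INR in D2. simpl in D1, D2.
      unfold phi, dist2.
      pose proof (ineq2 (fst (x v) - fst zBS) (snd (x v) - snd zBS)
                        (fst (x (par T v)) - fst zBS) (snd (x (par T v)) - snd zBS)
                        (INR (depth (par T) v)) (INR (depth (par T) (par T v)))
                        ltac:(lra) ltac:(lra)).
      replace (fst (x v) - fst zBS - (fst (x (par T v)) - fst zBS)) with (fst (x v) - fst (x (par T v))) in H by ring.
      replace (snd (x v) - snd zBS - (snd (x (par T v)) - snd zBS)) with (snd (x v) - snd (x (par T v))) in H by ring.
      lra. }
  assert (S2 : sumR (map (fun v => flow T v * phi (par T v)) NS) =
               sumR (map (fun w => phi w * inflow n T w) NS)).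
  { unfold inflow. fold NS.
    transitivity (sumR (map (fun w => sumR (map (fun u =>
        if vtx_eq_dec (par T u) w then phi w * flow T u else 0) NS)) NS)).
    2:{ apply sumR_ext; intros w _. rewrite <- sumR_scal. apply sumR_ext; intros u _.
        destruct (vtx_eq_dec (par T u) w); ring. }
    rewrite sumR_swap. apply sumR_ext. intros u Hu.
    rewrite (sumR_ind (par T u) (fun w => phi w * flow T u)) by apply nodup_nonsink.
    destruct (in_dec vtx_eq_dec (par T u) NS); [ring|].
    destruct (Hp u Hu) as [[Q|Q] _]; [contradiction|]. rewrite Q, phiS; ring. }
  assert (S3 : sumR (map (fun v => flow T v * (phi v - phi (par T v))) NS) =
               sumR (map (fun i => phi (Src i)) (seq 0 n))).
  { transitivity (sumR (map (fun w => phi w * (flow T w - inflow n T w)) NS)).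
    { transitivity (sumR (map (fun v => phi v * flow T v) NS) - sumR (map (fun v => flow T v * phi (par T v)) NS)).
      - rewrite <- sumR_minus. apply sumR_ext; intros; ring.
      - rewrite S2, <- sumR_minus. apply sumR_ext; intros; ring. }
    unfold NS, nonsink. rewrite !map_app, sumR_app, !map_map.
    rewrite (sumR_ext _ (fun _ => 0) (seq 0 (nst T))).
    2:{ intros j Hj. apply in_seq in Hj. rewrite Hstn by lia. ring. }
    rewrite (sumR_ext _ (fun i => phi (Src i)) (seq 0 n)).
    2:{ intros i Hi. apply in_seq in Hi. rewrite Hsrc by lia. ring. }
    assert (forall l : list nat, sumR (map (fun _ => 0) l) = 0) as Z0.
    { induction l as [|a l IHl]; [reflexivity|]. unfold sumR in *. simpl. rewrite IHl. ring. }
    rewrite Z0; ring. }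
  assert (S4 : / INR (n + k + 1) * sumR (map (fun i => dist2 (z i) zBS) (seq 0 n)) <=
               sumR (map (fun i => phi (Src i)) (seq 0 n))).
  { rewrite <- sumR_scal. apply sumR_le. intros i Hi. apply in_seq in Hi.
    assert (HN : In (Src i) NS).
    { unfold NS, nonsink. apply in_or_app; left. apply in_map, in_seq; lia. }
    pose proof (depth_pos n z zBS T hF _ HN) as D1.
    pose proof (depth_bound n z zBS T hF _ HN) as D2.
    apply le_INR in D1, D2. simpl in D1.
    assert (D3 : INR (depth (par T) (Src i)) <= INR (n + k + 1)).
    { rewrite !plus_INR in *. apply le_INR in hk. simpl. lra. }
    unfold phi. simpl (x (Src i)).
    assert (0 <= dist2 (z i) zBS) by (unfold dist2; pose proof (pow2_ge_0 (fst (z i) - fst zBS)); pose proof (pow2_ge_0 (snd (z i) - snd zBS)); lra).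
    rewrite Rmult_comm. unfold Rdiv. apply Rmult_le_compat_l; auto.
    apply Rinv_le_contravar; lra. }
  lra.
Qed.
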